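(* Let $N\ge 1$, fix a right transversal of $\Gamma_1(N)$ in $\mathrm{SL}_2(\mathbb{Z})$ with right coset representative function $g\mapsto\overline{g}$, and for $x,y\in\mathrm{SL}_2(\mathbb{Z})$ let $U(x,y)=xy\,(\overline{xy})^{-1}$. Let $T=\begin{pmatrix}1&1\\0&1\end{pmatrix}$. Let $a$ be an integer written as $a=qN+r$ with $q\in\mathbb{Z}$ and $0\le r<N$, and let $M\in\mathrm{SL}_2(\mathbb{Z})$. Then $$U(\overline{M},T^a)=U(\overline{M},T^N)^q\,U(\overline{M},T^r).$$
   Context: $\Gamma_1(N)$ is the subgroup of $\mathrm{SL}_2(\mathbb{Z})$ of matrices $\begin{pmatrix}a&b\\c&d\end{pmatrix}$ with $c\equiv 0$ and $a\equiv d\equiv 1 \pmod N$. A right transversal $\mathcal{T}$ of a subgroup $H$ in a group $G$ is a subset of $G$ containing the identity and exactly one element of each right coset $Hg$; the right coset representative function sends $g$ to the unique $\overline{g}\in\mathcal{T}$ with $Hg=H\overline{g}$. *)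

(* Defs.v *)
From mathcomp Require Import all_boot all_order all_algebra.
Set Implicit Arguments. Unset Strict Implicit. Unset Printing Implicit Defensive.
Import Order.TTheory GRing.Theory Num.Theory.
Local Open Scope ring_scope.

(* Integer 2x2 matrices; 'M[int]_2 is a unit ring, so x ^ (z : int) is
   available (negative powers use the matrix inverse invmx). *)
Notation mat2 := 'M[int]_2.

Definition i0 : 'I_2 := ord0.
Definition i1 : 'I_2 := ord_max.

Definition inSL2 (A : mat2) : Prop := \det A = 1.

Definition inGamma1 (N : nat) (A : mat2) : Prop :=
  inSL2 A /\
  (A i1 i0 = 0 %[mod (N%:Z)])%Z /\
  (A i0 i0 = 1 %[mod (N%:Z)])%Z /\
  (A i1 i1 = 1 %[mod (N%:Z)])%Z.

(* same right coset: Gamma_1(N) g = Gamma_1(N) h  iff  g h^{-1} in Gamma_1(N) *)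
Definition same_rcoset (N : nat) (g h : mat2) : Prop :=
  inGamma1 N (g * h^-1).

(* rep is the right coset representative function of a right transversal
   of Gamma_1(N) in SL_2(Z) (the transversal being the image of rep on
   SL_2(Z)): rep g lies in SL_2(Z) and in the coset of g, depends only on
   the coset of g, and the identity is the representative of its coset. *)
Definition rcoset_rep_fun (N : nat) (rep : mat2 -> mat2) : Prop :=
  [/\ forall g, inSL2 g -> inSL2 (rep g),
      forall g, inSL2 g -> same_rcoset N g (rep g),
      forall g h, inSL2 g -> inSL2 h -> same_rcoset N g h -> rep g = rep h
    & rep 1 = 1].

Definition Ucoc (rep : mat2 -> mat2) (x y : mat2) : mat2 :=
  x * y * (rep (x * y))^-1.

Definition Tmat : mat2 := \matrix_(i, j) (if (i == i1) && (j == i0) then 0 else 1).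

(* Main.v *)
Require Import Defs.
From mathcomp Require Import all_boot all_order all_algebra.
From mathcomp Require Import ring.
Import Order.TTheory GRing.Theory Num.Theory.
Local Open Scope ring_scope.

Lemma det2 (A : mat2) : \det A = A i0 i0 * A i1 i1 - A i0 i1 * A i1 i0.
Proof.
rewrite (expand_det_row A i0) !big_ord_recl big_ord0 /cofactor !det_mx11 /=.
rewrite !mxE /=.
rewrite (_ : lift i0 0 = i1); last by apply/val_inj.

rewrite (_ : lift i1 0 = i0); last by apply/val_inj.
rewrite (_ : ord0 = i0); last by apply/val_inj.
rewrite /= expr0 expr1. ring.
Qed.

Lemma mul2 (A B : mat2) i j : (A * B) i j = A i i0 * B i0 j + A i i1 * B i1 j.
Proof. rewrite !mxE !big_ord_recl big_ord0 addr0 /=.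
rewrite (_ : lift ord0 ord0 = i1); last by apply/val_inj. by []. Qed.

Definition Tm (m : int) : mat2 :=
  \matrix_(i, j) (if i == j then 1 else if i == i0 then m else 0).

Lemma ord2P (P : 'I_2 -> Prop) : P i0 -> P i1 -> forall i, P i.
Proof.
move=> h0 h1 [[|[|//]] Hi].
  by rewrite (_ : Ordinal Hi = i0) //; apply/val_inj.
by rewrite (_ : Ordinal Hi = i1) //; apply/val_inj.
Qed.

Lemma TmD m n : Tm m * Tm n = Tm (m + n).
Proof.
apply/matrixP; elim/ord2P; elim/ord2P; rewrite mul2 !mxE /=; ring.
Qed.

Lemma Tm0 : Tm 0 = 1.
Proof. apply/matrixP; elim/ord2P; elim/ord2P; rewrite !mxE //. Qed.

Lemma TmatE : Tmat = Tm 1.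
Proof. apply/matrixP; elim/ord2P; elim/ord2P; rewrite !mxE //. Qed.

Lemma Tm_unit m : Tm m \is a GRing.unit.
Proof. apply/unitrP; exists (Tm (- m)); rewrite !TmD addrN addNr Tm0 //. Qed.

Lemma TmV m : (Tm m)^-1 = Tm (- m).
Proof.
rewrite -[RHS]mul1r -[X in X * _](mulVr (Tm_unit m)) -mulrA TmD addrN Tm0 mulr1 //.
Qed.

Lemma TpowE (m : int) : Tmat ^ m = Tm m.
Proof.
have Hn : forall n : nat, Tmat ^+ n = Tm n.
  elim=> [|n IH]; first by rewrite expr0 Tm0.
  by rewrite exprS IH TmatE TmD -intS.
case: m => n; first exact: Hn.
rewrite /exprz Hn TmV NegzE //.
Qed.

Lemma SL2_unit g : inSL2 g -> g \is a GRing.unit.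
Proof. by move=> h; rewrite unitmxE h unitr1. Qed.

Definition adj2 (g : mat2) : mat2 :=
  \matrix_(i, j) (if i == j then g (if i == i0 then i1 else i0) (if i == i0 then i1 else i0)
                  else - g i j).

Lemma SL2_inv g : inSL2 g -> g^-1 = adj2 g.
Proof.
move=> h.
have H1 : g * adj2 g = 1.
  move: h; rewrite /inSL2 det2 => h.
  apply/matrixP; elim/ord2P; elim/ord2P; rewrite mul2 !mxE /= -?h; ring.
by rewrite -[LHS]mulr1 -H1 mulrA mulVr ?mul1r // SL2_unit.
Qed.

Lemma SL2M g h : inSL2 g -> inSL2 h -> inSL2 (g * h).
Proof. by rewrite /inSL2 => a b; rewrite detM a b mulr1. Qed.

Lemma SL2V g : inSL2 g -> inSL2 (g^-1).
Proof.
move=> a; rewrite /inSL2 -(mulr1 (\det g^-1)) -[X in _ * X = _]a -detM mulVr ?SL2_unit // det1 //.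
Qed.

Lemma SL2T m : inSL2 (Tm m).
Proof. by rewrite /inSL2 det2 !mxE /= mulr0 subr0 mulr1. Qed.

Lemma conjX (x y : mat2) (q : int) : x \is a GRing.unit -> y \is a GRing.unit ->
  (x * y * x^-1) ^ q = x * y ^ q * x^-1.
Proof.
move=> ux uy.
have Hn : forall n : nat, (x * y * x^-1) ^+ n = x * y ^+ n * x^-1.
  elim=> [|n IH]; first by rewrite !expr0 mulr1 mulrV.
  by rewrite exprS IH -!mulrA (mulKr ux) exprS -!mulrA.
case: q => n; first exact: Hn.
rewrite /exprz Hn.
have uu : y ^+ n.+1 \is a GRing.unit by rewrite unitrX.
have uxu : x * y ^+ n.+1 \is a GRing.unit by rewrite ?unitrMl ?unitrMr.
rewrite invrM ?unitrV // invrK invrM // mulrA //.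
Qed.

Lemma aux1 (B C k n : int) :
  (B * 1 + C * 0) * C + (B * (k * n) + C * 1) * - B - 0 = - (B * B * k) * n.
Proof. ring. Qed.
Lemma aux2 (A B C D k n : int) : A * C - D * B = 1 ->
  (A * 1 + D * 0) * C + (A * (k * n) + D * 1) * - B - 1 = - (A * B * k) * n.
Proof. move=> h; apply/eqP; rewrite -subr_eq0; apply/eqP.
rewrite (_ : _ - _ = (A * C - D * B) - 1); [by rewrite h subrr | ring]. Qed.
Lemma aux3 (A B C D k n : int) : A * C - D * B = 1 ->
  (B * 1 + C * 0) * - D + (B * (k * n) + C * 1) * A - 1 = (A * B * k) * n.
Proof. move=> h; apply/eqP; rewrite -subr_eq0; apply/eqP.
rewrite (_ : _ - _ = (A * C - D * B) - 1); [by rewrite h subrr | ring]. Qed.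

Lemma Gam (N : nat) g (k : int) : inSL2 g -> inGamma1 N (g * Tm (k * N%:Z) * g^-1).
Proof.
move=> h; split; first by apply: SL2M; [apply: SL2M => //; apply: SL2T | apply: SL2V].
have hd := h; move: hd; rewrite /inSL2 det2 => hd.
rewrite SL2_inv //.
split; [|split]; apply/eqP; rewrite eqz_mod_dvd; apply/dvdzP; rewrite !mul2 !mxE /=.
- exists (-(g i1 i0 * g i1 i0 * k)); exact: aux1.
- exists (-(g i0 i0 * g i1 i0 * k)); exact: aux2.
- exists (g i0 i0 * g i1 i0 * k); exact: aux3.
Qed.

Lemma rc (N : nat) g k m : inSL2 g ->
  same_rcoset N (g * Tm (k * N%:Z + m)) (g * Tm m).
Proof.
move=> h; rewrite /same_rcoset invrM ?Tm_unit ?SL2_unit // TmV.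
rewrite -!mulrA (mulrA (Tm _)) TmD -addrA subrr addr0 mulrA.
exact: Gam.
Qed.

Theorem lemma2p18 (N : nat) (hN : (1 <= N)%N) (rep : mat2 -> mat2)
    (hrep : rcoset_rep_fun N rep) (a q : int) (r : nat) (hr : (r < N)%N)
    (ha : a = q * N%:Z + r%:Z) (M : mat2) (hM : inSL2 M) :
  Ucoc rep (rep M) (Tmat ^ a) =
    (Ucoc rep (rep M) (Tmat ^ N%:Z)) ^ q * Ucoc rep (rep M) (Tmat ^ r%:Z).
Proof.
case: hrep => h1 h2 h3 h4.
have hx := h1 M hM.
set x := rep M in hx *.
have ux := SL2_unit x hx.
have F1 : rep x = x by rewrite /x -(h3 M (rep M)) //; apply: h2.
have F2 : rep (x * Tm N) = x.
  have := rc N x 1 0 hx; rewrite mul1r addr0 Tm0 mulr1 => hs.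
  rewrite -{2}F1; apply: h3 => //; apply: SL2M => //; exact: SL2T.
have F3 : rep (x * Tm a) = rep (x * Tm r).
  rewrite ha; apply: h3; [apply: SL2M => //; exact: SL2T | apply: SL2M => //; exact: SL2T | exact: rc].
have TN : Tm N ^ q = Tm (N%:Z * q) by rewrite -!TpowE exprz_exp.
rewrite /Ucoc !TpowE F2 F3 conjX ?Tm_unit // TN.
by rewrite -!mulrA (mulKr ux) (mulrA (Tm _)) TmD ha mulrC.
Qed.
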